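(* Consider the algorithm LaCAM$^\ast$ described in the context below, run without interruption, on an MAPF instance $(G,A,\mathcal{S},\mathcal{G})$ with a nonnegative transition cost $c_e$ and an admissible heuristic $h$, using any agent-ordering rule and any valid configuration generator. Then the algorithm terminates after finitely many iterations, and: if the instance has a solution, it returns a solution $\Pi$ that is optimal, i.e. $c(\Pi)\le c(\Pi')$ for every solution $\Pi'$; if the instance has no solution, it returns NO_SOLUTION. (That is, LaCAM$^\ast$ is complete and optimal.)
   Context: **MAPF.** $G=(V,E)$ is a finite undirected graph; $N(v)$ denotes the set of neighbours of $v\in V$. Agents are $A=\{1,\dots,n\}$; starts $\mathcal{S}=(s_1,\dots,s_n)$ and goals $\mathcal{G}=(g_1,\dots,g_n)$ are tuples of pairwise distinct vertices. A configuration is $Q\in V^n$, $Q[i]$ being the location of agent $i$. Configurations $X,Y$ are *connected* if $Y[i]\in N(X[i])\cup\{X[i]\}$ for all $i$, there is no $i\ne j$ with $Y[i]=Y[j]$ or $X[i]=X[j]$ (no vertex collision), and there is no $i\neq j$ with $X[i]=Y[j]$ and $Y[i]=X[j]$ (no edge collision). A *solution* is a sequence $\Pi=(Q_0,\dots,Q_k)$ with $Q_0=\mathcal{S}$, $Q_k=\mathcal{G}$ and $Q_t,Q_{t+1}$ connected for all $t$. Given a transition cost $c_e:V^n\times V^n\to\mathbb{R}_{\ge0}$, the cost of $\Pi$ is $c(\Pi)=\sum_{t=0}^{k-1}c_e(Q_t,Q_{t+1})$. A heuristic $h:V^n\to\mathbb{R}_{\ge 0}$ is *admissible* if $h(Q)$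 is at most the minimum cost of a sequence of consecutively connected configurations from $Q$ to $\mathcal{G}$ (for every $Q$ from which $\mathcal{G}$ is reachable; in particular $h(\mathcal{G})=0$). **Constraints.** A constraint node $C$ is either the root $C_{\mathrm{init}}$ or a triple $\langle \mathrm{parent}:C',\ \mathrm{who}:i,\ \mathrm{where}:u\rangle$ with $C'$ a constraint node, $i\in A$, $u\in V$. The constraint set of $C$ is the set of pairs $(i,u)$ collected along the parent chain to the root; $\mathrm{depth}(C)$ is its size ($\mathrm{depth}(C_{\mathrm{init}})=0$). **Ingredients.** An *agent-ordering rule* assigns to each generated high-level node an arbitrary permutation $\mathrm{order}$ of $A$. A *valid configuration generator* is a function that, given a configuration $Q$ and a constraint node $C$, returns either $\bot$ or a configuration $Q'$ connected to $Q$ with $Q'[i]=u$ for all $(i,u)$ in the constraint set of $C$; moreover, whenever the constraint set of $C$ assigns a location to every agent and the resulting configuration is connected to $Q$, it does not return $\bot$ (hence returns exactly that configuration). **High-level nodes.** A node $\mathcal{N}$ stores: $\mathrm{config}$ (a configuration), $\mathrm{tree}$ (a FIFO queue of constraint nodes), $\mathrm{parent}$ (a node or $\bot$), $\mathrm{neighbors}$ (a list of nodes), $g\in\mathbb{R}_{\ge0}$, and $\mathrm{order}$. Write $f(\mathcal{N})=\mathcal{N}.g+h(\mathcal{N}.\mathrm{config})$ and $c_e(\mathcal{N},\mathcal{N}')=c_e(\mathcal{N}.\mathrm{config},\mathcal{N}'.\mathrm{config})$. **Algorithm LaCAM$^\ast$.** OPEN is a stack (LIFO), EXPLORED a map from configurations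 to nodes, $\mathcal{N}_{\mathrm{goal}}:=\bot$. Create $\mathcal{N}_{\mathrm{init}}$ with config $\mathcal{S}$, tree $[C_{\mathrm{init}}]$, parent $\bot$, neighbors $\emptyset$, $g=0$; push it on OPEN and set EXPLORED$[\mathcal{S}]=\mathcal{N}_{\mathrm{init}}$. While OPEN is nonempty: 1. Let $\mathcal{N}$ be the top of OPEN (not removed). If $\mathcal{N}.\mathrm{config}=\mathcal{G}$, set $\mathcal{N}_{\mathrm{goal}}:=\mathcal{N}$. 2. If $\mathcal{N}_{\mathrm{goal}}\ne\bot$ and $f(\mathcal{N}_{\mathrm{goal}})\le f(\mathcal{N})$, pop OPEN and continue. 3. If $\mathcal{N}.\mathrm{tree}$ is empty, pop OPEN and continue. 4. Dequeue $C$ from $\mathcal{N}.\mathrm{tree}$. If $\mathrm{depth}(C)<n$, let $i=\mathcal{N}.\mathrm{order}[\mathrm{depth}(C)+1]$ and, for each $u\in N(\mathcal{N}.\mathrm{config}[i])\cup\{\mathcal{N}.\mathrm{config}[i]\}$, enqueue $\langle C,i,u\rangle$ into $\mathcal{N}.\mathrm{tree}$. 5. Let $Q_{\mathrm{new}}$ be the generator's output on $(\mathcal{N}.\mathrm{config},C)$; if $\bot$, continue. 6. If EXPLORED$[Q_{\mathrm{new}}]$ is defined: append it to $\mathcal{N}.\mathrm{neighbors}$; then run a Dijkstra update: $D$ is a min-priority queue on $g$ initialized with $\mathcal{N}$; while $D\ne\emptyset$, pop $\mathcal{N}_{\mathrm{from}}$ and for each $\mathcal{N}_{\mathrm{to}}\in\mathcal{N}_{\mathrm{from}}.\mathrm{neighbors}$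 let $g'=\mathcal{N}_{\mathrm{from}}.g+c_e(\mathcal{N}_{\mathrm{from}},\mathcal{N}_{\mathrm{to}})$; if $g'<\mathcal{N}_{\mathrm{to}}.g$, set $\mathcal{N}_{\mathrm{to}}.g:=g'$, $\mathcal{N}_{\mathrm{to}}.\mathrm{parent}:=\mathcal{N}_{\mathrm{from}}$, push $\mathcal{N}_{\mathrm{to}}$ into $D$, and if moreover $\mathcal{N}_{\mathrm{goal}}\neq\bot$ and $f(\mathcal{N}_{\mathrm{to}})<f(\mathcal{N}_{\mathrm{goal}})$, push $\mathcal{N}_{\mathrm{to}}$ onto OPEN. 7. Otherwise create $\mathcal{N}_{\mathrm{new}}$ with config $Q_{\mathrm{new}}$, tree $[C_{\mathrm{init}}]$, parent $\mathcal{N}$, neighbors $\emptyset$, $g=\mathcal{N}.g+c_e(\mathcal{N}.\mathrm{config},Q_{\mathrm{new}})$, order given by the ordering rule; push it on OPEN, set EXPLORED$[Q_{\mathrm{new}}]=\mathcal{N}_{\mathrm{new}}$, and append $\mathcal{N}_{\mathrm{new}}$ to $\mathcal{N}.\mathrm{neighbors}$. When OPEN is empty: if $\mathcal{N}_{\mathrm{goal}}\ne\bot$, return the sequence of configurations obtained by following parent pointers from $\mathcal{N}_{\mathrm{goal}}$ back to $\mathcal{N}_{\mathrm{init}}$, reversed; otherwise return NO_SOLUTION. *)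

(* Defs.v *)
(* Formal model of the LaCAM* algorithm as a small-step
   (nondeterministic) transition system. *)
From HB Require Import structures.
From mathcomp Require Import all_boot all_order all_algebra perm.
Import Order.TTheory GRing.Theory Num.Theory.
Local Open Scope ring_scope.

Section LaCAM.

(* Graph G = (V,E): finite vertex type, adjacency relation [adj] (N(v) = [adj v]). *)
Variables (V : finType) (adj : rel V).
(* n agents, indexed by 'I_n (agent k+1 of the paper is the ordinal k). *)
Variable (n : nat).
Variable (R : realFieldType).

Definition config := {ffun 'I_n -> V}.

(* A constraint node, represented by the list of pairs (who, where) collected
   along the parent chain (most recent first); the root C_init is [::].
   <parent: C, who: i, where: u> is ((i,u) :: C). *)
Definition cnode := seq ('I_n * V).

Definition depth (C : cnode) : nat := size (undup C).

Definition connected (X Y : config) : bool :=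
  [forall i, (Y i == X i) || adj (X i) (Y i)] &&
  [forall i, forall j, (i != j) ==>
     [&& Y i != Y j, X i != X j & ~~ ((X i == Y j) && (Y i == X j))]].

Definition closed_nbhd (v : V) : seq V := [seq u <- enum V | adj v u || (u == v)].

Variable (ce : config -> config -> R).

Fixpoint pcost (x : config) (s : seq config) : R :=
  match s with
  | [::] => 0
  | y :: s' => ce x y + pcost y s'
  end.

Definition cost (p : seq config) : R :=
  match p with [::] => 0 | q :: r => pcost q r end.

Variables (S G : config).

Definition is_solution (p : seq config) : Prop :=
  match p with
  | [::] => False
  | q :: r => q = S /\ last q r = G /\ path connected q r
  end.

Variable (h : config -> R).

(* admissibility: h(Q) is at most the cost of every sequence of consecutively
   connected configurations from Q to G (hence at most the minimum cost);
   nonnegativity of h is a separate hypothesis of the theorem. *)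
Definition admissible : Prop :=
  forall (Q : config) (p : seq config),
    path connected Q p -> last Q p = G -> h Q <= pcost Q p.

Definition valid_generator (gen : config -> cnode -> option config) : Prop :=
  forall (Q : config) (C : cnode),
    (forall Q' : config, gen Q C = Some Q' ->
        connected Q Q' /\ (forall i u, (i, u) \in C -> Q' i = u)) /\
    (forall Q' : config, (forall i u, ((i, u) \in C) = (Q' i == u)) ->
        connected Q Q' -> gen Q C <> None).

Variable (gen : config -> cnode -> option config).

(* High-level node; a node is identified by its configuration, which is its
   key in EXPLORED (the map is injective on nodes). *)
Record node := Node {
  ntree : seq cnode;          (* FIFO queue, head = front *)
  nparent : option config;
  nnbrs : seq config;
  ng : R;
  norder : {perm 'I_n} }.      (* order[k+1] of the paper = norder k *)

Definition explored := config -> option node.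

Inductive phase :=
| Main                       (* at the head of the main while loop *)
| Dijk of seq config.        (* inside the Dijkstra update, with queue D *)

Record state := St {
  sexp : explored;
  sopen : seq config;        (* stack; head = top *)
  sgoal : option config;
  sphase : phase }.

Definition g_of (ex : explored) (q : config) : R :=
  if ex q is Some N then ng N else 0.
Definition f_of (ex : explored) (q : config) : R := g_of ex q + h q.
Definition nbrs_of (ex : explored) (q : config) : seq config :=
  if ex q is Some N then nnbrs N else [::].

Definition upd (ex : explored) (q : config) (N : node) : explored :=
  fun x => if x == q then Some N else ex x.

Definition set_tree (N : node) (t : seq cnode) : node :=
  Node t (nparent N) (nnbrs N) (ng N) (norder N).
Definition add_nbr (N : node) (q : config) : node :=
  Node (ntree N) (nparent N) (rcons (nnbrs N) q) (ng N) (norder N).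
Definition set_gp (N : node) (g : R) (p : config) : node :=
  Node (ntree N) (Some p) (nnbrs N) g (norder N).

Definition newgoal (q : config) (goal : option config) : option config :=
  if q == G then Some q else goal.

Definition stop_cond (ex : explored) (q : config) (goal : option config) : bool :=
  if goal is Some qg then f_of ex qg <= f_of ex q else false.

(* step 4: agent order[depth(C)+1] if depth(C) < n *)
Definition child_agent (N : node) (C : cnode) : option 'I_n :=
  omap (norder N) (insub (depth C) : option 'I_n).

(* children <C,i,u> enqueued in step 4, for u ranging over [us]
   (an arbitrary enumeration of N(Q[i]) \cup {Q[i]}) *)
Definition children (N : node) (C : cnode) (us : seq V) : seq cnode :=
  if child_agent N C is Some i then [seq (i, u) :: C | u <- us] else [::].

Definition children_ok (N : node) (q : config) (C : cnode) (us : seq V) : Prop :=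
  if child_agent N C is Some i then perm_eq us (closed_nbhd (q i)) else True.

(* processing of one N_to in the Dijkstra update, N_from = qf *)
Definition relax (goal : option config) (qf : config)
    (acc : explored * seq config * seq config) (qt : config)
    : explored * seq config * seq config :=
  let: (ex, D, op) := acc in
  match ex qt with
  | None => acc
  | Some Nt =>
    let g' := g_of ex qf + ce qf qt in
    if g' < ng Nt then
      let ex' := upd ex qt (set_gp Nt g' qf) in
      let op' := if goal is Some qg then
                   (if f_of ex' qt < f_of ex' qg then qt :: op else op)
                 else op in
      (ex', qt :: D, op')
    else acc
  end.

Definition dijk_res (ex : explored) (op : seq config) (goal : option config)
    (D : seq config) (qf : config) :=
  foldl (relax goal qf) (ex, rem qf D, op) (nbrs_of ex qf).

(* one step of the algorithm: one iteration of the main loop, or one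
   iteration of the while loop of the Dijkstra update (or its exit).
   Nondeterminism: the order of a new node (arbitrary agent-ordering rule),
   the enumeration order of N(v) \cup {v} in step 4, and the tie-breaking
   among minimal elements of the priority queue D. *)
Inductive lstep : state -> state -> Prop :=
| step_pop ex q op goal N :
    ex q = Some N ->
    stop_cond ex q (newgoal q goal) \/ ntree N = [::] ->
    lstep (St ex (q :: op) goal Main) (St ex op (newgoal q goal) Main)
| step_nogen ex q op goal N C tr us :
    ex q = Some N -> ~~ stop_cond ex q (newgoal q goal) ->
    ntree N = C :: tr -> children_ok N q C us ->
    gen q C = None ->
    lstep (St ex (q :: op) goal Main)
          (St (upd ex q (set_tree N (tr ++ children N C us)))
              (q :: op) (newgoal q goal) Main)
| step_old ex q op goal N C tr us qn :
    ex q = Some N -> ~~ stop_cond ex q (newgoal q goal) ->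
    ntree N = C :: tr -> children_ok N q C us ->
    gen q C = Some qn ->
    upd ex q (set_tree N (tr ++ children N C us)) qn <> None ->
    lstep (St ex (q :: op) goal Main)
          (St (upd ex q (add_nbr (set_tree N (tr ++ children N C us)) qn))
              (q :: op) (newgoal q goal) (Dijk [:: q]))
| step_new ex q op goal N C tr us qn (sigma : {perm 'I_n}) :
    ex q = Some N -> ~~ stop_cond ex q (newgoal q goal) ->
    ntree N = C :: tr -> children_ok N q C us ->
    gen q C = Some qn ->
    upd ex q (set_tree N (tr ++ children N C us)) qn = None ->
    lstep (St ex (q :: op) goal Main)
          (St (upd (upd ex q (add_nbr (set_tree N (tr ++ children N C us)) qn))
                   qn (Node [:: [::]] (Some q) [::] (ng N + ce q qn) sigma))
              (qn :: q :: op) (newgoal q goal) Main)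
| step_dijk ex op goal D qf :
    qf \in D -> (forall x, x \in D -> g_of ex qf <= g_of ex x) ->
    lstep (St ex op goal (Dijk D))
          (St (dijk_res ex op goal D qf).1.1 (dijk_res ex op goal D qf).2
              goal (Dijk (dijk_res ex op goal D qf).1.2))
| step_dijk_end ex op goal :
    lstep (St ex op goal (Dijk [::])) (St ex op goal Main).

Definition init_state (sigma0 : {perm 'I_n}) : state :=
  St (fun x => if x == S then Some (Node [:: [::]] None [::] 0 sigma0) else None)
     [:: S] None Main.

Inductive reach (s : state) : state -> Prop :=
| reach0 : reach s s
| reachS t u : reach s t -> lstep t u -> reach s u.

(* OPEN is empty: the algorithm stops and returns *)
Definition final (s : state) : Prop := sphase s = Main /\ sopen s = [::].

(* backchain ex q l: l is the list of configurations met by following parent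
   pointers from (the node of) q back to N_init (the node of S). The returned
   solution is rev l. *)
Inductive backchain (ex : explored) : config -> seq config -> Prop :=
| bc_init : backchain ex S [:: S]
| bc_step q N p l : q != S -> ex q = Some N -> nparent N = Some p ->
    backchain ex p l -> backchain ex q (q :: l).

Definition output_correct (s : state) : Prop :=
  match sgoal s with
  | None => (* returns NO_SOLUTION *) ~ (exists p, is_solution p)
  | Some qg => exists l, backchain (sexp s) qg l /\ is_solution (rev l) /\
                 forall p', is_solution p' -> cost (rev l) <= cost p'
  end.

End LaCAM.

(* Main.v *)
Require Import Defs.
From HB Require Import structures.
From mathcomp Require Import all_boot all_order all_algebra perm.
From mathcomp Require Import zify.
From Stdlib Require Import Lia.
Import Order.TTheory GRing.Theory Num.Theory.
Local Open Scope ring_scope.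
Set Implicit Arguments. Unset Strict Implicit.

Section Proof.
Variables (V : finType) (adj : rel V) (n : nat) (R : realFieldType)
  (S G : config V n) (ce : config V n -> config V n -> R) (h : config V n -> R)
  (gen : config V n -> cnode V n -> option (config V n)).
Hypothesis ce_ge0 : forall X Y, 0 <= ce X Y.
Hypothesis h_ge0 : forall Q, 0 <= h Q.
Hypothesis hadm : admissible V adj n R ce G h.
Hypothesis hgen : valid_generator V adj n gen.

Local Notation cfg := (config V n).
Local Notation nd := (node V n R).
Local Notation exT := (explored V n R).
Local Notation gof := (g_of V n R).
Local Notation fof := (f_of V n R h).
Local Notation pc := (pcost V n R ce).
Local Notation conn := (connected V adj n).
Local Notation ntr := (ntree V n R).
Local Notation npar := (nparent V n R).
Local Notation nnb := (nnbrs V n R).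
Local Notation ngg := (ng V n R).
Local Notation nord := (norder V n R).
Local Notation bchain := (backchain V n R S).
Local Notation updx := (upd V n R).
Local Notation step := (lstep V adj n R ce G h gen).
Local Notation St' := (St V n R).
Local Notation Main' := (Main V n).
Local Notation Dijk' := (Dijk V n).

Lemma pc_cat x s1 s2 : pc x (s1 ++ s2) = pc x s1 + pc (last x s1) s2.
Proof. by elim: s1 x => [|y s1 IH] x /=; rewrite ?add0r // IH addrA. Qed.

Lemma pc_ge0 x s : 0 <= pc x s.
Proof. by elim: s x => [|y s IH] x //=; rewrite addr_ge0. Qed.

Lemma pc_rcons x s y : pc x (rcons s y) = pc x s + ce (last x s) y.
Proof. by rewrite -cats1 pc_cat /= addr0. Qed.

Lemma pc_take x s k : pc x (take k s) <= pc x s.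
Proof. by rewrite -{2}(cat_take_drop k s) pc_cat lerDl pc_ge0. Qed.

Lemma mem_last_take (x y : cfg) s : y \in x :: s ->
  exists2 k, (k <= size s)%N & last x (take k s) = y.
Proof.
elim: s x => [|z s IH] x.
  by rewrite inE => /eqP ->; exists 0%N.
rewrite inE => /orP [/eqP ->|]; first by exists 0%N.
move=> /IH [k hk hl]; exists k.+1 => //.
Qed.


Definition walk_ok (ex : exT) (x : cfg) (w : seq cfg) :=
  [/\ uniq (S :: w), last S w = x, pc S w = gof ex x &
      forall k, (k <= size w)%N -> isSome (ex (last S (take k w))) /\
         gof ex (last S (take k w)) <= pc S (take k w)].

Definition GPinv (ex : exT) : Prop :=
  [/\ (forall x N, ex x = Some N -> 0 <= ngg N),
      (exists2 N, ex S = Some N & ngg N = 0),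
      (forall x, isSome (ex x) -> exists w, walk_ok ex x w),
      (forall x N, ex x = Some N -> x != S -> exists p,
          [/\ npar N = Some p, isSome (ex p), conn p x & gof ex p + ce p x <= ngg N]) &
      (forall x, isSome (ex x) -> exists l, bchain ex x l)].

Lemma gofE (ex : exT) x N : ex x = Some N -> gof ex x = ngg N.
Proof. by rewrite /g_of => ->. Qed.

Lemma bc_transfer (ex ex' : exT) x l : bchain ex x l ->
  (forall y N, y \in l -> ex y = Some N -> exists N', ex' y = Some N' /\ npar N' = npar N) ->
  bchain ex' x l.
Proof.
elim=> [|q N p l0 hq hN hp hb IH] H; first exact: bc_init.
have [N' [h1 h2]] := H q N (mem_head _ _) hN.
apply: (bc_step _ _ _ _ _ q N' p) => //; first by rewrite h2.
by apply: IH => y M hy; apply: H; rewrite inE hy orbT.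
Qed.

Lemma bc_expl (ex : exT) x l : bchain ex x l -> isSome (ex S) ->
  forall y, y \in l -> isSome (ex y).
Proof.
elim=> [|q N p l0 hq hN hp hb IH] hS y; first by rewrite inE => /eqP ->.
by rewrite inE => /orP [/eqP ->|/IH]; [rewrite hN | apply].
Qed.

Lemma bc_head (ex : exT) x l : bchain ex x l -> exists l', l = x :: l'.
Proof. by case=> [|q N p l0 _ _ _ _]; eexists. Qed.

Lemma bc_gmono (ex : exT) x l : bchain ex x l ->
  (forall x N, ex x = Some N -> x != S -> exists p,
          [/\ npar N = Some p, isSome (ex p), conn p x & gof ex p + ce p x <= ngg N]) ->
  forall y, y \in l -> gof ex y <= gof ex x.
Proof.
move=> hb hpar; elim: hb => [|q N p l0 hq hN hp hb IH] y; first by rewrite inE => /eqP ->.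
rewrite inE => /orP [/eqP ->//|/IH hy].
have [p' [e1 _ _ hle]] := hpar q N hN hq.
move: e1 hle; rewrite hp => -[<-] hle; rewrite (gofE hN).
apply: le_trans hy _; apply: le_trans hle; by rewrite lerDl.
Qed.


Lemma updE (ex : exT) q N x : updx ex q N x = if x == q then Some N else ex x.
Proof. by []. Qed.

Lemma walk_expl (ex : exT) x w y : walk_ok ex x w -> y \in S :: w -> isSome (ex y).
Proof. by case=> _ _ _ H /mem_last_take [k hk <-]; case: (H k hk). Qed.

Lemma walk_ext (ex ex' : exT) x w : walk_ok ex x w ->
  (forall y, isSome (ex y) -> isSome (ex' y)) ->
  (forall y, isSome (ex y) -> gof ex' y <= gof ex y) ->
  gof ex' x = gof ex x -> walk_ok ex' x w.
Proof.
case=> hu hl hp H h1 h2 h3; split=> // [|k hk]; first by rewrite h3.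
have [a b] := H k hk; split; first exact: h1.
exact: le_trans (h2 _ a) b.
Qed.

Lemma walk_rcons (ex : exT) p w q : walk_ok ex p w -> q \notin S :: w ->
  isSome (ex q) -> gof ex q = gof ex p + ce p q -> walk_ok ex q (rcons w q).
Proof.
case=> hu hl hp H hq hs hg; split.
- by rewrite -rcons_cons rcons_uniq hq hu.
- by rewrite last_rcons.
- by rewrite pc_rcons hl hp hg.
move=> k; rewrite size_rcons leq_eqVlt => /orP [/eqP ->|hk].
  by rewrite -(size_rcons w q) take_size last_rcons pc_rcons hl hp hg.
by rewrite -cats1 takel_cat //; apply: H.
Qed.

Lemma GP_same (ex ex' : exT) :
  (forall x, isSome (ex' x) = isSome (ex x)) ->
  (forall x, gof ex' x = gof ex x) ->
  (forall x N', ex' x = Some N' -> exists N, ex x = Some N /\ npar N' = npar N) ->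
  GPinv ex -> GPinv ex'.
Proof.
move=> hs hg hp [g0 [NS hS hS0] wk par bc]; split.
- move=> x N' hx; have [N [hN _]] := hp _ _ hx.
  by rewrite -(gofE hx) hg (gofE hN); apply: g0 hN.
- case E: (ex' S) => [N'|]; last by move: (hs S); rewrite E hS.
  by exists N' => //; rewrite -(gofE E) hg (gofE hS).
- move=> x; rewrite hs => /wk [w hw]; exists w; apply: walk_ext hw _ _ _.
  + by move=> y; rewrite hs.
  + by move=> y _; rewrite hg.
  + by rewrite hg.
- move=> x N' hx hxS; have [N [hN e]] := hp _ _ hx.
  have [p [h1 h2 h3 h4]] := par _ _ hN hxS; exists p; split => //.
  + by rewrite e.
  + by rewrite hs.
  + by rewrite hg -(gofE hx) hg (gofE hN).
- move=> x; rewrite hs => /bc [l hl]; exists l; apply: bc_transfer hl _.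
  move=> y N _ hy; case E: (ex' y) => [N'|]; last by move: (hs y); rewrite E hy.
  have [N0 [h1 h2]] := hp _ _ E; move: h1 h2; rewrite hy => -[<-] h2; by exists N'.
Qed.


Lemma GP_new (ex : exT) q qn Nq N0 : ex qn = None -> ex q = Some Nq ->
  conn q qn -> npar N0 = Some q -> ngg N0 = ngg Nq + ce q qn ->
  GPinv ex -> GPinv (updx ex qn N0).
Proof.
move=> hqn hq hc hp0 hg0 [g0 [NS hS hS0] wk par bc].
have oth y : isSome (ex y) -> updx ex qn N0 y = ex y.
  by move=> hy; rewrite updE; case: eqP => // e; move: hy; rewrite e hqn.
have gofo y : isSome (ex y) -> gof (updx ex qn N0) y = gof ex y.
  by move=> hy; rewrite /g_of oth.
have hqq : q != qn by apply/eqP => e; move: hq; rewrite e hqn.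
have hn : updx ex qn N0 qn = Some N0 by rewrite updE eqxx.
have ext y : isSome (ex y) -> isSome (updx ex qn N0 y) by move=> hy; rewrite oth.
have tr l x : bchain ex x l -> bchain (updx ex qn N0) x l.
  move=> hb; apply: bc_transfer hb _ => y N _ hy; exists N; split => //.
  by rewrite oth // hy.
split.
- move=> x N; rewrite updE; case: eqP => _; last exact: g0.
  by case=> <-; rewrite hg0 addr_ge0 // (g0 _ _ hq).
- by exists NS => //; rewrite oth ?hS.
- move=> x; rewrite updE; case: eqP => [->|hx] hs.
    have hqs : isSome (ex q) by rewrite hq.
    have [w hw] := wk q hqs; exists (rcons w qn).
    apply: walk_rcons.
    + apply: walk_ext hw _ _ _ => //; first by move=> y hy; rewrite gofo.
      by rewrite gofo.
    + by apply/negP => /(walk_expl hw); rewrite hqn.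
    + by rewrite hn.
    + by rewrite (gofo q) ?hq // (gofE hn) (gofE hq) hg0.
  have [w hw] := wk _ hs; exists w; apply: walk_ext hw _ _ _ => //.
  + by move=> y hy; rewrite gofo.
  + by rewrite gofo.
- move=> x N; rewrite updE; case: eqP => [->|hx] hN hxS.
    move: hN => [<-]; exists q; split => //; first by rewrite oth hq.
    by rewrite gofo ?hq // (gofE hq) hg0.
  have [p [h1 h2 h3 h4]] := par _ _ hN hxS; exists p; split => //.
    by rewrite oth.
  by rewrite gofo.
- move=> x; rewrite updE; case: eqP => [->|hx] hs.
    have hqs : isSome (ex q) by rewrite hq.
    have [l hl] := bc q hqs; exists (qn :: l).
    apply: (bc_step _ _ _ _ _ qn N0 q) => //; last exact: tr.
    by apply/eqP => e; move: hS; rewrite -e hqn.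
  by have [l hl] := bc _ hs; exists l; apply: tr.
Qed.


Lemma bc_splice (ex ex' : exT) x l qt lt : bchain ex x l -> qt \in l ->
  bchain ex' qt lt -> (forall y, y != qt -> ex' y = ex y) ->
  exists l', bchain ex' x l'.
Proof.
move=> hb hin hqt hoth; elim: hb hin => [|q N p l0 hq hN hp hb IH].
  by rewrite mem_seq1 => /eqP e; move: hqt; rewrite e => ?; exists lt.
rewrite inE; case: (eqVneq q qt) => [->|hne] /= hin; first by exists lt.
have [l' hl'] := IH hin; exists (q :: l').
by apply: (bc_step _ _ _ _ _ q N p) => //; rewrite hoth.
Qed.

Lemma GP_relax (ex : exT) qf qt Nf Nt : ex qf = Some Nf -> ex qt = Some Nt ->
  conn qf qt -> gof ex qf + ce qf qt < ngg Nt -> GPinv ex ->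
  GPinv (updx ex qt (set_gp V n R Nt (gof ex qf + ce qf qt) qf)).
Proof.
set g' := gof ex qf + ce qf qt; set ex' := updx ex qt _.
move=> hf ht hc hlt [g0 [NS hS hS0] wk par bc].
have hne : qt != qf.
  apply/eqP => e; move: hlt; rewrite /g' e (gofE hf); move: ht; rewrite e hf => -[->].
  by rewrite ltNge lerDl ce_ge0.
have gf0 : 0 <= gof ex qf by rewrite (gofE hf); apply: g0 hf.
have hts : qt != S.
  apply/eqP => e; move: hlt; move: ht; rewrite e hS => -[<-]; rewrite hS0.
  by rewrite ltNge addr_ge0.
have oth y : y != qt -> ex' y = ex y by rewrite /ex' updE => /negbTE ->.
have hnew : ex' qt = Some (set_gp V n R Nt g' qf) by rewrite /ex' updE eqxx.
have expl y : isSome (ex' y) = isSome (ex y).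
  by case: (eqVneq y qt) => [->|hy]; [rewrite hnew ht | rewrite oth].
have gofo y : y != qt -> gof ex' y = gof ex y by move=> hy; rewrite /g_of oth.
have gnew : gof ex' qt = g' by rewrite (gofE hnew).
have gle y : gof ex' y <= gof ex y.
  case: (eqVneq y qt) => [->|hy]; last by rewrite gofo.
  by rewrite gnew (gofE ht) ltW.
have hfs : isSome (ex qf) by rewrite hf.
split.
- move=> x N; case: (eqVneq x qt) => [->|hx]; last by rewrite oth //; apply: g0.
  by rewrite hnew => -[<-] /=; rewrite addr_ge0.
- by exists NS => //; rewrite oth // eq_sym.
- move=> x; rewrite expl; case: (eqVneq x qt) => [->|hx] hs; last first.
    have [w hw] := wk _ hs; exists w; apply: walk_ext hw _ _ _ => //.
    + by move=> y; rewrite expl.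
    + by rewrite gofo.
  have [w hw] := wk _ hfs; exists (rcons w qt); apply: walk_rcons.
  + apply: walk_ext hw _ _ _ => //; first by move=> y; rewrite expl.
    by rewrite gofo // eq_sym.
  + apply/negP => /mem_last_take [k hk hl]; case: hw => _ hlw hpw H.
    have [_ hle] := H k hk; move: hle; rewrite hl => hle.
    have := le_trans hle (pc_take _ _ _); rewrite hpw => hle2.
    move: hlt; rewrite (gofE ht) in hle2; rewrite /g'.
    by rewrite ltNge (le_trans hle2) // lerDl ce_ge0.
  + by rewrite hnew.
  + by rewrite gnew gofo // eq_sym.
- move=> x N; case: (eqVneq x qt) => [->|hx].
    rewrite hnew => -[<-] _; exists qf; split => //=.
    + by rewrite expl.
    + by rewrite gofo // eq_sym.
  rewrite oth // => hN hxS; have [p [h1 h2 h3 h4]] := par _ _ hN hxS.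
  exists p; split => //; first by rewrite expl.
  exact: le_trans (lerD (gle p) (lexx _)) h4.
- have [lf hlf] := bc _ hfs.
  have hnin : qt \notin lf.
    apply/negP => /(bc_gmono hlf par); rewrite (gofE ht).
    apply/negP; rewrite -ltNge; apply: le_lt_trans hlt; by rewrite lerDl.
  have trf l x : bchain ex x l -> qt \notin l -> bchain ex' x l.
    move=> hb hn; apply: bc_transfer hb _ => y N hy hyN; exists N; split => //.
    by rewrite oth //; apply: contraNneq hn => <-.
  have hqt : bchain ex' qt (qt :: lf).
    apply: (bc_step _ _ _ _ _ qt (set_gp V n R Nt g' qf) qf) => //.
    exact: trf.
  move=> x; rewrite expl => /bc [l hl].
  case: (boolP (qt \in l)) => hin; last by exists l; apply: trf.
  by apply: (bc_splice hl hin hqt oth).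
Qed.


Definition pot (F : option nd -> nat) (ex : exT) : nat := (\sum_(x : cfg) F (ex x))%N.

Lemma pot_upd F (ex : exT) q N :
  (pot F (updx ex q N) + F (ex q) = pot F ex + F (Some N))%N.
Proof.
rewrite /pot.
have -> : (\sum_(x : cfg) F (updx ex q N x) = F (Some N) + \sum_(x | x != q) F (ex x))%N.
  rewrite (bigD1 q) //= updE eqxx; congr (_ + _)%N.
  by apply: eq_bigr => i /negbTE hi; rewrite updE hi.
rewrite [in RHS](bigD1 q) //=.
by rewrite addnAC [RHS]addnAC [(F (Some N) + _)%N]addnC.
Qed.

Fixpoint allseqs (k : nat) : seq (seq cfg) :=
  if k is k'.+1 then [::] :: [seq x :: s | x <- enum cfg, s <- allseqs k'] else [:: [::]].

Lemma allseqsP k (s : seq cfg) : (size s <= k)%N -> s \in allseqs k.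
Proof.
elim: k s => [|k IH] [|x s] //=.
move=> hs; rewrite inE; apply/orP; right.
apply/allpairsP; exists (x, s) => /=; split => //; first by rewrite mem_enum.
exact: IH.
Qed.

Definition Fl : seq R := map (pc S) (allseqs #|{: cfg}|).

Lemma walk_Fl (ex : exT) x w : walk_ok ex x w -> gof ex x \in Fl.
Proof.
case=> hu _ hp _; rewrite -hp; apply: map_f; apply: allseqsP.
have /card_uniqP e := hu; have := max_card (mem (S :: w)).
by rewrite e /= => /ltnW.
Qed.


Definition cntlt (v : R) : nat := count (fun w => w < v) Fl.

Lemma count_lt_mono (a b : R) (s : seq R) : a <= b ->
  (count (fun w => (w < a)%R) s <= count (fun w => (w < b)%R) s)%N.
Proof. by move=> hab; apply: sub_count => w /= hw; apply: lt_le_trans hw hab. Qed.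

Lemma count_lt_strict (a b : R) (s : seq R) : a < b -> a \in s ->
  (count (fun w => (w < a)%R) s < count (fun w => (w < b)%R) s)%N.
Proof.
move=> hab; elim: s => [|w s IH] //; rewrite inE => /orP [/eqP <-|hin] /=.
  by rewrite ltxx hab add0n add1n ltnS count_lt_mono // ltW.
have hc := IH hin; case ha: (w < a).
  by have -> : w < b by apply: lt_trans hab; rewrite ha.
by case: (w < b); rewrite /= ?add0n ?add1n //; apply: ltnW.
Qed.


Definition AGinv (ex : exT) := forall x N, ex x = Some N -> forall C, C \in ntr N ->
  map fst C = map (fun i => nord N i) (rev (take (size C) (enum 'I_n))).
Definition NBinv (ex : exT) (E : pred cfg) := forall x N, ex x = Some N ->
  forall y, y \in nnb N -> [/\ conn x y, isSome (ex y) & (~~ E x -> gof ex y <= ngg N + ce x y)].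
Definition CPinv (ex : exT) := forall x N, ex x = Some N -> forall Q, conn x Q ->
  Q \in nnb N \/ exists2 C, C \in ntr N & forall i u, (i, u) \in C -> Q i = u.

Definition Sinv (ex : exT) (E : pred cfg) := [/\ GPinv ex, AGinv ex, NBinv ex E & CPinv ex].

Lemma Sinv_mono (ex : exT) (E E' : pred cfg) : (forall x, E x -> E' x) -> Sinv ex E -> Sinv ex E'.
Proof.
move=> hE [a b c d]; split => // x N hN y hy; have [h1 h2 h3] := c x N hN y hy.
split => // hx; apply: h3; apply: contra hx; exact: hE.
Qed.

Definition OPinv (ex : exT) (op : seq cfg) (goal : option cfg) :=
  [/\ (forall x, x \in op -> isSome (ex x)),
      (forall x N, ex x = Some N -> x \notin op ->
          ntr N = [::] \/ (goal = Some G /\ fof ex G <= fof ex x)),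
      (forall qg, goal = Some qg -> qg = G /\ isSome (ex G)) &
      (goal = None -> isSome (ex G) -> G \in op)].

Definition Uf (o : option nd) : nat := if o then 0%N else 1%N.
Definition Gf (o : option nd) : nat := if o is Some N then cntlt (ngg N) else 0%N.
Definition K := #|V|.+1.
Definition tp (N : nd) : nat := (\sum_(C <- ntr N) K ^ (n - size C))%N.
Definition Tf (o : option nd) : nat := if o is Some N then tp N else 0%N.

Definition rlx goal qf acc qt := relax V n R ce h goal qf acc qt.
Arguments rlx : simpl never.

Lemma relax_ok goal qf (ex : exT) D op qt :
  Sinv ex (fun x => (x == qf) || (x \in D)) -> OPinv ex op goal ->
  qt \in nbrs_of V n R ex qf ->
  let acc' := rlx goal qf (ex, D, op) qt in
  Sinv acc'.1.1 (fun x => (x == qf) || (x \in acc'.1.2)) /\ OPinv acc'.1.1 acc'.2 goal /\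
      (acc' = (ex, D, op) \/
        [/\ pot Uf acc'.1.1 = pot Uf ex, pot Tf acc'.1.1 = pot Tf ex &
            (pot Gf acc'.1.1 < pot Gf ex)%N]) /\
      (forall y, isSome (acc'.1.1 y) = isSome (ex y)) /\
      (forall y, gof acc'.1.1 y <= gof ex y) /\
      gof acc'.1.1 qf = gof ex qf /\
      nbrs_of V n R acc'.1.1 =1 nbrs_of V n R ex /\
      gof acc'.1.1 qt <= gof ex qf + ce qf qt.
Proof.
move=> [gp ag nb cp] [o1 o2 o3 o4].
rewrite /nbrs_of; case hf: (ex qf) => [Nf|] // hqt.
have [hc hts _] := nb _ _ hf _ hqt.
case ht: (ex qt) hts => [Nt|] // _.
rewrite /rlx /relax ht.
set g' := gof ex qf + ce qf qt.
case: ifP => hlt; last first.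
  do !split => //=; first by left.
  by rewrite (gofE ht) leNgt hlt.
set ex' := updx ex qt (set_gp V n R Nt g' qf).
have hne : qt != qf.
  apply/eqP => e; move: hlt; rewrite /g' e (gofE hf); move: ht; rewrite e hf => -[->].
  by rewrite ltNge lerDl ce_ge0.
have gp' : GPinv ex' by exact: (GP_relax hf ht hc hlt gp).
have oth y : y != qt -> ex' y = ex y by rewrite /ex' updE => /negbTE ->.
have hnew : ex' qt = Some (set_gp V n R Nt g' qf) by rewrite /ex' updE eqxx.
have expl y : isSome (ex' y) = isSome (ex y).
  by case: (eqVneq y qt) => [->|hy]; [rewrite hnew ht | rewrite oth].
have gofo y : y != qt -> gof ex' y = gof ex y by move=> hy; rewrite /g_of oth.
have gnew : gof ex' qt = g' by rewrite (gofE hnew).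
have gle y : gof ex' y <= gof ex y.
  case: (eqVneq y qt) => [->|hy]; last by rewrite gofo.
  by rewrite gnew (gofE ht) ltW.
have nodeP x N' : ex' x = Some N' ->
   (x = qt /\ N' = set_gp V n R Nt g' qf) \/ (x != qt /\ ex x = Some N').
  case: (eqVneq x qt) => [->|hx]; first by rewrite hnew => -[<-]; left.
  by rewrite oth // => ?; right.
have fG : fof ex' G <= fof ex G by rewrite /f_of lerD2r.
set op' := (if goal is Some qg then _ else _).
have hop : {subset op <= op'}.
  rewrite /op'; case: goal {o2 o3 o4 op'} => [qg|] y hy //; case: ifP => _ //; by rewrite in_cons hy orbT.
have hop2 x : x \in op' -> x = qt \/ x \in op.
  rewrite /op'; case: goal {o2 o3 o4 op' hop} => [qg|]; last by right.
  by case: ifP => _ //; [rewrite in_cons => /orP [/eqP ->|]; [left|right] | right].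
split; [|split; [|split; [|split; [|split; [|split; [|split]]]]]] => /=.
- split => //.
  + move=> x N' /nodeP [[_ ->]|[_ hN]] C hC; last exact: ag hN C hC.
    exact: ag ht C hC.
  + move=> x N' /nodeP [[-> ->]|[hx hN]] y hy.
      have [a b _] := nb _ _ ht y hy; split => //; first by rewrite expl.
      by rewrite inE eqxx orbT.
    have [a b c] := nb _ _ hN y hy; split => //; first by rewrite expl.
    rewrite inE negb_or => /andP [h1 /norP [_ h2]].
    apply: le_trans (gle y) _; apply: c; by rewrite negb_or h1.
  + move=> x N' /nodeP [[-> ->]|[hx hN]] Q hQ; last exact: cp hN Q hQ.
    exact: cp ht Q hQ.
- split.
  + move=> x /hop2 [->|/o1]; last by rewrite expl.
    by rewrite hnew.
  + move=> x N' /nodeP [[-> ->]|[hx hN]] hnin.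
      have hnin' : qt \notin op by apply: contra hnin; apply: hop.
      case: (o2 _ _ ht hnin') => [->|[hg hle]]; [by left|right; split => //].
      move: hnin; rewrite /op' hg; case: ifP => hlt2; first by rewrite in_cons eqxx.
      by rewrite leNgt hlt2.
    have hnin' : x \notin op by apply: contra hnin; apply: hop.
    case: (o2 _ _ hN hnin') => [->|[hg hle]]; [by left|right; split => //].
    apply: le_trans fG _; apply: le_trans hle _.
    by rewrite /f_of gofo.
  + by move=> qg /o3 [a b]; rewrite expl.
  + by move=> hg; rewrite expl => /(o4 hg) /hop.
- right; split.
  + apply/eqP; rewrite -(eqn_add2r (Uf (ex qt))) pot_upd ht; by rewrite eqxx.
  + apply/eqP; rewrite -(eqn_add2r (Tf (ex qt))) pot_upd ht; by rewrite eqxx.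
  + rewrite -(ltn_add2r (Gf (ex qt))) pot_upd ht ltn_add2l /=.
    apply: count_lt_strict => //.
    have [_ _ wk _ _] := gp'.
    have hs : isSome (ex' qt) by rewrite hnew.
    have [w hw] := wk qt hs; have := walk_Fl hw; by rewrite gnew.
- exact: expl.
- exact: gle.
- by rewrite gofo // eq_sym.
- move=> y; rewrite /nbrs_of; case: (eqVneq y qt) => [->|hy]; first by rewrite hnew ht.
  by rewrite oth.
- by rewrite gnew.
Qed.


Definition tight (ex : exT) qf y := isSome (ex y) /\ gof ex y <= gof ex qf + ce qf y.

Lemma fold_ok goal qf L s : forall (ex : exT) D op,
  Sinv ex (fun x => (x == qf) || (x \in D)) -> OPinv ex op goal ->
  nbrs_of V n R ex qf = L -> {subset s <= L} ->
  (forall y, y \in L -> y \notin s -> tight ex qf y) ->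
  let acc' := foldl (rlx goal qf) (ex, D, op) s in
  [/\ Sinv acc'.1.1 (fun x => (x == qf) || (x \in acc'.1.2)), OPinv acc'.1.1 acc'.2 goal,
   (acc' = (ex, D, op) \/
        [/\ pot Uf acc'.1.1 = pot Uf ex, pot Tf acc'.1.1 = pot Tf ex &
            (pot Gf acc'.1.1 < pot Gf ex)%N]),
   nbrs_of V n R acc'.1.1 qf = L &
   (forall y, y \in L -> tight acc'.1.1 qf y)].
Proof.
elim: s => [|y s IH] ex D op hS hO hL hsub ht.
  by split => //; [left | move=> y hy; apply: ht].
have hy : y \in nbrs_of V n R ex qf by rewrite hL hsub // mem_head.
have := relax_ok hS hO hy.
case E: (rlx goal qf (ex, D, op) y) => [[ex1 D1] op1] /=.
move=> [hS1 [hO1 [hc [hexp [hgle [hgf [hnb hty]]]]]]].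
have hL1 : nbrs_of V n R ex1 qf = L by rewrite hnb.
have hsub1 : {subset s <= L} by move=> z hz; apply: hsub; rewrite in_cons hz orbT.
have ht1 : forall z, z \in L -> z \notin s -> tight ex1 qf z.
  move=> z hz hzs; case: (eqVneq z y) => [->|hzy].
    split; last by rewrite hgf.
    rewrite hexp; move: hy; rewrite /nbrs_of; case hf: (ex qf) => [Nf|] // hy.
    by case: hS => _ _ nb _; case: (nb _ _ hf _ hy).
  have hzn : z \notin y :: s by rewrite in_cons negb_or hzy.
  have [t1 t2] := ht z hz hzn.
  split; first by rewrite hexp.
  by rewrite hgf; apply: le_trans (hgle _) t2.
have [a b c d e] := IH ex1 D1 op1 hS1 hO1 hL1 hsub1 ht1.
rewrite /= E; split => //.
move: c; case: hc => [[-> -> ->]|[u1 t1 g1]] c; first by [].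
right; case: c => [->|[u2 t2 g2]]; first by split.
by split; [rewrite u2 | rewrite t2 | apply: ltn_trans g1].
Qed.


Definition agf (sig : {perm 'I_n}) (C : cnode V n) :=
  map fst C = map (fun i => sig i) (rev (take (size C) (enum 'I_n))).

Lemma agf_uniq sig C : agf sig C -> uniq C /\ (size C <= n)%N.
Proof.
move=> hC; split.
  apply: (@map_uniq _ _ fst); rewrite hC map_inj_uniq; last exact: perm_inj.
  by rewrite rev_uniq take_uniq // enum_uniq.
have := congr1 size hC; rewrite !size_map size_rev size_take size_enum_ord.
by case: ifP => [hh _|_ e] //; [apply: ltnW | apply: eq_leq; exact: e].
Qed.

Lemma agf_depth sig C : agf sig C -> depth V n C = size C.
Proof. by move=> /agf_uniq [hu _]; rewrite /depth undup_id. Qed.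

Lemma agf_child sig C k u : agf sig C -> val k = size C ->
  agf sig ((sig k, u) :: C).
Proof.
move=> hC hk; rewrite /agf /= hC.
have hlt : (size C < size (enum 'I_n))%N by rewrite size_enum_ord -hk ltn_ord.
by rewrite (take_nth k hlt) rev_rcons /= -hk nth_ord_enum.
Qed.

Lemma agf_full sig C : agf sig C -> size C = n -> forall i, exists u, (i, u) \in C.
Proof.
move=> hC hn i.
have : i \in map fst C.
  rewrite hC hn take_oversize ?size_enum_ord //.
  apply/mapP; exists (perm_inv sig i); first by rewrite mem_rev mem_enum.
  by rewrite permKV.
by move=> /mapP [[j u] hju /= ->]; exists u.
Qed.

Lemma sum_const_seq (T : Type) (s : seq T) (c : nat) : (\sum_(u <- s) c = size s * c)%N.
Proof. by elim: s => [|x s IH]; rewrite ?big_nil ?big_cons ?IH ?mulSn. Qed.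

Lemma child_agentP (N : nd) C : agf (nord N) C ->
  (exists2 k : 'I_n, val k = size C & child_agent V n R N C = Some (nord N k)) \/
  (child_agent V n R N C = None /\ size C = n).
Proof.
move=> hC; rewrite /child_agent (agf_depth hC); have [_ hle] := agf_uniq hC.
case: insubP => [k hk ek|hk]; first by left; exists k.
by right; split => //; apply/eqP; rewrite eqn_leq hle leqNgt.
Qed.


Definition N1of (N : nd) tr C us := set_tree V n R N (tr ++ children V n R N C us).

Lemma deq_ok (ex : exT) q N C tr us : ex q = Some N -> AGinv ex -> CPinv ex ->
  ntr N = C :: tr -> children_ok V adj n R N q C us ->
  [/\ forall C', C' \in ntr (N1of N tr C us) -> agf (nord N) C',
      (tp (N1of N tr C us) < tp N)%N &
      forall Q, conn q Q -> Q \in nnb N \/ (exists2 C', C' \in ntr (N1of N tr C us) &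
            forall i u, (i, u) \in C' -> Q i = u) \/ gen q C = Some Q].
Proof.
move=> hq ag cp htr hok.
have hC : agf (nord N) C by apply: (ag _ _ hq); rewrite htr mem_head.
have htr' C' : C' \in tr -> agf (nord N) C'.
  by move=> h'; apply: (ag _ _ hq); rewrite htr in_cons h' orbT.
rewrite /N1of /set_tree /= /children; move: hok; rewrite /children_ok.
case: (child_agentP hC) => [[k hk ->]|[-> hn]] hok.
- split.
  + move=> C'; rewrite mem_cat => /orP [/htr'//|/mapP [u _ ->]].
    exact: agf_child.
  + rewrite /tp /= htr big_cat big_cons big_map /= sum_const_seq addnC ltn_add2r.
    have hlt : (size C < n)%N by rewrite -hk ltn_ord.
    have -> : (n - size C = (n - (size C).+1).+1)%N by rewrite subnSK.
    rewrite expnS ltn_pmul2r ?expn_gt0 // (perm_size hok) size_filter /K ltnS.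
    by apply: (leq_trans (count_size _ _)); rewrite cardE.
  + move=> Q hQ; case: (cp _ _ hq Q hQ) => [->|[C' hC' hcons]]; first by left.
    right; left; move: hC'; rewrite htr in_cons => /orP [/eqP eC|hin]; last first.
      by exists C' => //; rewrite mem_cat hin.
    exists ((nord N k, Q (nord N k)) :: C).
      rewrite mem_cat; apply/orP; right; apply/mapP; exists (Q (nord N k)) => //.
      rewrite (perm_mem hok) mem_filter mem_enum andbT.
      move: hQ => /andP [/forallP /(_ (nord N k)) /orP [/eqP ->|->] _] //.
      by rewrite eqxx orbT.
    move=> i u; rewrite in_cons => /orP [/eqP [-> ->] //|].
    by rewrite -eC; apply: hcons.
- split.
  + by move=> C'; rewrite cats0; apply: htr'.
  + by rewrite /tp /= htr big_cons cats0 -{1}(add0n (\sum_(i <- tr) _)%N) ltn_add2r expn_gt0.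
  + move=> Q hQ; case: (cp _ _ hq Q hQ) => [->|[C' hC' hcons]]; first by left.
    move: hC'; rewrite htr in_cons => /orP [/eqP eC|hin]; last first.
      by right; left; exists C' => //; rewrite cats0.
    subst C'; right; right.
    have [hg1 hg2] := hgen q C.
    have hall i u : ((i, u) \in C) = (Q i == u).
      apply/idP/eqP => [/hcons //|<-].
      have [u' hu'] := agf_full hC hn i; by rewrite (hcons _ _ hu').
    case E: (gen q C) => [qn|]; last by have := hg2 Q hall hQ; rewrite E.
    have [_ hqn] := hg1 qn E; congr Some; apply/ffunP => i.
    by have [u' hu'] := agf_full hC hn i; rewrite (hqn _ _ hu') (hcons _ _ hu').
Qed.


Definition Dof (ph : phase V n) : seq cfg := if ph is Dijk D then D else [::].

Definition Inv (s : state V n R) : Prop :=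
  match s with St ex op goal ph => Sinv ex (fun x => x \in Dof ph) /\ OPinv ex op goal end.

Lemma updP (ex : exT) q N' x M : updx ex q N' x = Some M ->
  (x = q /\ M = N') \/ (x != q /\ ex x = Some M).
Proof.
rewrite updE; case: (eqVneq x q) => [->|hx]; first by move=> [<-]; left.
by move=> ?; right.
Qed.

Lemma newgoal_OP (ex : exT) q op goal : isSome (ex q) -> OPinv ex (q :: op) goal ->
  OPinv ex (q :: op) (newgoal V n G q goal).
Proof.
move=> hq [o1 o2 o3 o4]; rewrite /newgoal; split => //.
- move=> x N hN hx; case: (o2 x N hN hx) => [->|[-> hle]]; first by left.
  by right; case: ifP => [/eqP ->|].
- move=> qg; case: ifP => [/eqP eq [<-]|_ /o3] //; by split; [|move: hq; rewrite eq].
- by case: ifP => // _ /o4.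
Qed.

Lemma OP_same (ex ex' : exT) op goal :
  (forall x, isSome (ex' x) = isSome (ex x)) -> (forall x, gof ex' x = gof ex x) ->
  (forall x N', ex' x = Some N' -> x \notin op -> ex x = Some N') ->
  OPinv ex op goal -> OPinv ex' op goal.
Proof.
move=> hs hg hn [o1 o2 o3 o4]; split.
- by move=> x /o1; rewrite hs.
- move=> x N' hN' hx; have hN := hn _ _ hN' hx.
  by rewrite /f_of !hg; apply: o2 hN hx.
- by move=> qg /o3; rewrite hs.
- by move=> hg0; rewrite hs => /(o4 hg0).
Qed.

Lemma Sinv_drop (ex : exT) qf (E : pred cfg) :
  Sinv ex (fun x => (x == qf) || E x) ->
  (forall y, y \in nbrs_of V n R ex qf -> tight ex qf y) -> Sinv ex E.
Proof.
move=> [gp ag nb cp] ht; split => // x N hN y hy.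
have [a b c] := nb x N hN y hy; split => // hE.
case: (eqVneq x qf) => [exq|hxq]; last by apply: c; rewrite negb_or hxq hE.
move: hN hy; rewrite exq => hN hy.
have hy' : y \in nbrs_of V n R ex qf by rewrite /nbrs_of hN.
by have [_] := ht y hy'; rewrite (gofE hN).
Qed.


Lemma upd_keep (ex : exT) q N N' : ex q = Some N -> ngg N' = ngg N -> npar N' = npar N ->
  [/\ forall x, isSome (updx ex q N' x) = isSome (ex x),
      forall x, gof (updx ex q N') x = gof ex x,
      GPinv ex -> GPinv (updx ex q N'),
      pot Uf (updx ex q N') = pot Uf ex & pot Gf (updx ex q N') = pot Gf ex].
Proof.
move=> hq hg hp.
have hs x : isSome (updx ex q N' x) = isSome (ex x).
  by rewrite updE; case: eqP => [->|]; rewrite ?hq.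
have hgo x : gof (updx ex q N') x = gof ex x.
  by rewrite /g_of updE; case: eqP => [->|]; rewrite ?hq.
split => //.
- apply: GP_same => // x M /updP [[-> ->]|[_ hx]]; first by exists N.
  by exists M.
- by apply/eqP; rewrite -(eqn_add2r (Uf (ex q))) pot_upd hq.
- by apply/eqP; rewrite -(eqn_add2r (Gf (ex q))) pot_upd hq /= hg.
Qed.

Lemma Tpot_dec (ex : exT) q N N' : ex q = Some N -> (tp N' < tp N)%N ->
  (pot Tf (updx ex q N') < pot Tf ex)%N.
Proof.
move=> hq hlt; rewrite -(ltn_add2r (Tf (ex q))) pot_upd hq /=.
by rewrite ltn_add2l.
Qed.

Lemma nogen_step (ex : exT) q op goal N C tr us :
  ex q = Some N -> ntr N = C :: tr -> children_ok V adj n R N q C us -> gen q C = None ->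
  Inv (St' ex (q :: op) goal Main') ->
  let ex' := updx ex q (N1of N tr C us) in
  Inv (St' ex' (q :: op) (newgoal V n G q goal) Main') /\
  [/\ pot Uf ex' = pot Uf ex, pot Gf ex' = pot Gf ex & (pot Tf ex' < pot Tf ex)%N].
Proof.
move=> hq htr hok hgn [[gp ag nb cp] hO] ex'.
have [da db dc] := deq_ok hq ag cp htr hok.
have [hs hg hgp hU hG] := upd_keep (N' := N1of N tr C us) hq erefl erefl.
have hqs : isSome (ex q) by rewrite hq.
split; last by split => //; apply: Tpot_dec hq db.
split; last first.
  apply: OP_same (newgoal_OP hqs hO) => // x M /updP [[-> _]|[_ ->]] //.
  by rewrite mem_head.
split => //; first exact: hgp.
- move=> x M /updP [[_ ->]|[_ hx]]; last exact: ag hx.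
  exact: da.
- move=> x M /updP [[-> ->]|[_ hx]] y hy.
    have [a b c] := nb _ _ hq y hy; split => //; first by rewrite hs.
    by rewrite hg.
  have [a b c] := nb _ _ hx y hy; split => //; first by rewrite hs.
  by rewrite hg.
- move=> x M /updP [[-> ->]|[_ hx]] Q hQ; last exact: cp hx Q hQ.
  case: (dc Q hQ) => [|[]]; [by left | by right | by rewrite hgn].
Qed.


Lemma old_step (ex : exT) q op goal N C tr us qn :
  ex q = Some N -> ntr N = C :: tr -> children_ok V adj n R N q C us -> gen q C = Some qn ->
  updx ex q (N1of N tr C us) qn <> None ->
  Inv (St' ex (q :: op) goal Main') ->
  let ex' := updx ex q (add_nbr V n R (N1of N tr C us) qn) in
  Inv (St' ex' (q :: op) (newgoal V n G q goal) (Dijk' [:: q])) /\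
  [/\ pot Uf ex' = pot Uf ex, pot Gf ex' = pot Gf ex & (pot Tf ex' < pot Tf ex)%N].
Proof.
move=> hq htr hok hgn hqn [[gp ag nb cp] hO] ex'.
have [da db dc] := deq_ok hq ag cp htr hok.
have [hs hg hgp hU hG] := upd_keep (N' := add_nbr V n R (N1of N tr C us) qn) hq erefl erefl.
have hqs : isSome (ex q) by rewrite hq.
have [hcq _] := (hgen q C).1 qn hgn.
have hqn' : isSome (ex' qn).
  move: hqn; rewrite /ex' !updE; case: eqP => // _.
  by case: (ex qn).
split; last by split => //; exact: (Tpot_dec (N' := add_nbr V n R (N1of N tr C us) qn) hq db).
split; last first.
  apply: OP_same (newgoal_OP hqs hO) => // x M /updP [[-> _]|[_ ->]] //.
  by rewrite mem_head.
split => //; first exact: hgp.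
- move=> x M /updP [[_ ->]|[_ hx]]; last exact: ag hx.
  exact: da.
- move=> x M /updP [[-> ->]|[hxq hx]] y hy.
    move: hy; rewrite /= mem_rcons in_cons => /orP [/eqP ->|hy].
      by split => //; rewrite mem_seq1 eqxx.
    have [a b c] := nb _ _ hq y hy; split => //; first by rewrite hs.
    by rewrite mem_seq1 eqxx.
  have [a b c] := nb _ _ hx y hy; split => //; first by rewrite hs.
  by move=> _; rewrite hg; apply: c.
- move=> x M /updP [[-> ->]|[_ hx]] Q hQ; last exact: cp hx Q hQ.
  case: (dc Q hQ) => [hin|[hC|hgq]].
  + by left; rewrite /= mem_rcons in_cons hin orbT.
  + by right.
  + by left; move: hgq; rewrite hgn => -[->]; rewrite /= mem_rcons mem_head.
Qed.


Lemma new_step (ex : exT) q op goal N C tr us qn (sig : {perm 'I_n}) :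
  ex q = Some N -> ntr N = C :: tr -> children_ok V adj n R N q C us -> gen q C = Some qn ->
  updx ex q (N1of N tr C us) qn = None ->
  Inv (St' ex (q :: op) goal Main') ->
  let ex1 := updx ex q (add_nbr V n R (N1of N tr C us) qn) in
  let ex2 := updx ex1 qn (Node V n R [:: [::]] (Some q) [::] (ngg N + ce q qn) sig) in
  Inv (St' ex2 (qn :: q :: op) (newgoal V n G q goal) Main') /\ (pot Uf ex2 < pot Uf ex)%N.
Proof.
move=> hq htr hok hgn hqn [[gp ag nb cp] hO] ex1 ex2.
set N1' := add_nbr V n R (N1of N tr C us) qn.
set Nn := Node V n R [:: [::]] (Some q) [::] (ngg N + ce q qn) sig.
have [da db dc] := deq_ok hq ag cp htr hok.
have [hs hg hgp hU hG] := upd_keep (N' := N1') hq erefl erefl.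
have hqs : isSome (ex q) by rewrite hq.
have [hcq _] := (hgen q C).1 qn hgn.
have hqnq : qn != q by apply/eqP => e; move: hqn; rewrite updE e eqxx.
have hexqn : ex qn = None by move: hqn; rewrite updE (negbTE hqnq).
have hex1qn : ex1 qn = None by rewrite /ex1 updE (negbTE hqnq).
have hex1q : ex1 q = Some N1' by rewrite /ex1 updE eqxx.
have gp2 : GPinv ex2.
  by apply: (GP_new (Nq := N1') hex1qn hex1q hcq) => //; apply: hgp.
have hn2 : ex2 qn = Some Nn by rewrite /ex2 updE eqxx.
have o2 y : y != qn -> ex2 y = ex1 y by rewrite /ex2 updE => /negbTE ->.
have hs2 y : isSome (ex2 y) = (y == qn) || isSome (ex y).
  by case: (eqVneq y qn) => [->|hy]; [rewrite hn2 | rewrite o2 // hs].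
have hg2 y : isSome (ex y) -> gof ex2 y = gof ex y.
  move=> hy; have hyq : y != qn by apply: contraTneq hy => ->; rewrite hexqn.
  by rewrite /g_of o2 // -/(g_of _ _ _ ex1 y) hg.
have hO' := newgoal_OP hqs hO; case: hO' => [p1 p2 p3 p4].
split; last first.
  rewrite -hU; rewrite -(ltn_add2r (Uf (ex1 qn))) pot_upd hex1qn /=.
  by rewrite addn0 addn1.
split.
  split => //.
  - move=> x M /updP [[_ ->] D|[_ /updP [[_ ->]|[_ hx]]]].
    + by rewrite /= mem_seq1 => /eqP ->; rewrite /agf take0.
    + exact: da.
    + exact: ag hx.
  - move=> x M /updP [[-> ->] //|[hxqn /updP [[-> ->]|[hxq hx]]]] y hy.
      move: hy; rewrite /= mem_rcons in_cons => /orP [/eqP ->|hy].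
        by split => //; [rewrite hn2 | rewrite (gofE hn2)].
      have [a b c] := nb _ _ hq y hy; split => //; first by rewrite hs2 b orbT.
      by rewrite hg2.
    have [a b c] := nb _ _ hx y hy; split => //; first by rewrite hs2 b orbT.
    by rewrite hg2.
  - move=> x M /updP [[-> ->]|[hxqn /updP [[-> ->]|[hxq hx]]]] Q hQ.
    + by right; exists [::] => //; rewrite mem_seq1.
    + case: (dc Q hQ) => [hin|[hC|hgq]].
      * by left; rewrite /= mem_rcons in_cons hin orbT.
      * by right.
      * by left; move: hgq; rewrite hgn => -[->]; rewrite /= mem_rcons mem_head.
    + exact: cp hx Q hQ.
split.
- move=> x; rewrite in_cons => /orP [/eqP ->|/p1 hx]; first by rewrite hn2.
  by rewrite hs2 hx orbT.
- move=> x M /updP [[-> _]|[hxqn /updP [[-> _]|[hxq hx]]]]; first by rewrite mem_head.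
    by rewrite in_cons mem_head orbT.
  rewrite in_cons negb_or hxqn /= => hnin.
  case: (p2 x M hx hnin) => [->|[hng hle]]; first by left.
  right; split => //; have [_ hGs] := p3 G hng.
  have hxs : isSome (ex x) by rewrite hx.
  by rewrite /f_of hg2 // hg2.
- by move=> qg /p3 [-> hGs]; rewrite hs2 hGs orbT.
- move=> hng; rewrite hs2 => /orP [/eqP ->|hGs]; first by rewrite mem_head.
  by rewrite in_cons (p4 hng hGs) orbT.
Qed.


Lemma dijk_step (ex : exT) op goal D qf : qf \in D ->
  Inv (St' ex op goal (Dijk' D)) ->
  let r := dijk_res V n R ce h ex op goal D qf in
  Inv (St' r.1.1 r.2 goal (Dijk' r.1.2)) /\
  (r = (ex, rem qf D, op) \/
    [/\ pot Uf r.1.1 = pot Uf ex, pot Tf r.1.1 = pot Tf ex & (pot Gf r.1.1 < pot Gf ex)%N]).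
Proof.
move=> hqf [hS hO] r.
have hS' : Sinv ex (fun x => (x == qf) || (x \in rem qf D)).
  apply: Sinv_mono hS => x /= hx; case: (eqVneq x qf) => //= hne.
  exact: rem_mem.
have := @fold_ok goal qf (nbrs_of V n R ex qf) (nbrs_of V n R ex qf) ex (rem qf D) op hS' hO
  erefl (fun y hy => hy) (fun y hy hn => False_ind _ (negP hn hy)).
rewrite /r /dijk_res; set acc := foldl _ _ _.
change (foldl (rlx goal qf) (ex, rem qf D, op) (nbrs_of V n R ex qf)) with acc.
move=> [a b c d e]; split => //; split => //=.
by apply: (Sinv_drop a); rewrite d.
Qed.


Lemma pop_step (ex : exT) q op goal N : ex q = Some N ->
  stop_cond V n R h ex q (newgoal V n G q goal) \/ ntr N = [::] ->
  Inv (St' ex (q :: op) goal Main') -> Inv (St' ex op (newgoal V n G q goal) Main').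
Proof.
move=> hq hc [hS hO]; split => //.
have hqs : isSome (ex q) by rewrite hq.
have [p1 p2 p3 p4] := newgoal_OP hqs hO; split => //.
- by move=> x hx; apply: p1; rewrite in_cons hx orbT.
- move=> x M hx hnin; case: (eqVneq x q) => [exq|hxq].
    move: hx; rewrite exq hq => -[<-].
    case: hc => [|->]; last by left.
    rewrite /stop_cond; case E: (newgoal V n G q goal) => [qg|] // hle.
    by have [eG _] := p3 qg E; right; split; [rewrite eG | rewrite -eG].
  by apply: p2 hx _; rewrite in_cons negb_or hxq.
- move=> hng hG; have := p4 hng hG; rewrite in_cons => /orP [/eqP eGq|] //.
  by move: hng; rewrite /newgoal -eGq eqxx.
Qed.

Definition mu (s : state V n R) : nat * nat * nat * nat * nat :=
  match s with St ex op _ ph =>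
    (pot Uf ex, pot Gf ex, pot Tf ex, size op, if ph is Dijk D then (size D).+1 else 0%N) end.

Definition lexlt (a b : nat * nat * nat * nat * nat) : Prop :=
  let: (a1, a2, a3, a4, a5) := a in let: (b1, b2, b3, b4, b5) := b in
  (a1 < b1)%N \/ (a1 = b1 /\ ((a2 < b2)%N \/ (a2 = b2 /\ ((a3 < b3)%N \/
     (a3 = b3 /\ ((a4 < b4)%N \/ (a4 = b4 /\ (a5 < b5)%N))))))).

Lemma step_ok s t : Inv s -> step s t -> Inv t /\ lexlt (mu t) (mu s).
Proof.
move=> hI hst; case: hst hI.
- move=> ex q op goal N hq hc hI; split; first exact: pop_step hq hc hI.
  by rewrite /=; right; split => //; right; split => //; right; split => //; left.
- move=> ex q op goal N C tr us hq _ htr hok hgn hI.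
  have [hI' [e1 e2 e3]] := nogen_step hq htr hok hgn hI; split => //.
  by rewrite /= e1 e2; right; split => //; right; split => //; left.
- move=> ex q op goal N C tr us qn hq _ htr hok hgn hqn hI.
  have [hI' [e1 e2 e3]] := old_step hq htr hok hgn hqn hI; split => //.
  by rewrite /= e1 e2; right; split => //; right; split => //; left.
- move=> ex q op goal N C tr us qn sig hq _ htr hok hgn hqn hI.
  have [hI' e1] := new_step sig hq htr hok hgn hqn hI; split => //.
  by rewrite /=; left.
- move=> ex op goal D qf hqf _ hI.
  have [hI' hc] := dijk_step hqf hI; split => //.
  case: hc => [->|[e1 e2 e3]] /=; last by right; split => //; left.
  do 4 (right; split => //); rewrite size_rem // ltnS.
  by case: (D) hqf => //= x D' _.
- move=> ex op goal [hS hO]; split => //; by do 4 (right; split => //).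
Qed.


Lemma acc_ok : forall s, Inv s -> Acc (fun t s => step s t) s.
Proof.
suff H : forall a b c d e s, Inv s -> mu s = (a, b, c, d, e) -> Acc (fun t s => step s t) s.
  by move=> s hs; case E: (mu s) => [[[[a b] c] d] e]; apply: (H a b c d e s hs E).
elim/ltn_ind => a IHa; elim/ltn_ind => b IHb; elim/ltn_ind => c IHc.
elim/ltn_ind => d IHd; elim/ltn_ind => e IHe s hI hm.
constructor => t hst; have [hI' hlt] := step_ok hI hst.
move: hlt; rewrite hm; case E: (mu t) => [[[[a' b'] c'] d'] e'] /=.
case=> [ha|[ea [hb|[eb [hc|[ec [hd|[ed he]]]]]]]]; subst.
- exact: IHa ha b' c' d' e' t hI' E.
- exact: IHb hb c' d' e' t hI' E.
- exact: IHc hc d' e' t hI' E.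
- exact: IHd hd e' t hI' E.
- exact: IHe he t hI' E.
Qed.

Lemma init_ok sig0 : Inv (init_state V n R S sig0).
Proof.
set N0 := Node V n R [:: [::]] None [::] 0 sig0.
rewrite /init_state; set ex0 := (fun x : cfg => if x == S then Some N0 else None).
have hS : ex0 S = Some N0 by rewrite /ex0 eqxx.
have hx x M : ex0 x = Some M -> x = S /\ M = N0.
  by rewrite /ex0; case: eqP => // -> [<-].
split; split.
- split.
  + by move=> x M /hx [_ ->].
  + by exists N0.
  + move=> x; case E: (ex0 x) => [M|] // _; have [-> _] := hx _ _ E; exists [::]; split => //.
    * by rewrite (gofE hS).
    * by move=> k; rewrite leqn0 => /eqP ->; rewrite hS (gofE hS).
  + by move=> x M /hx [-> _]; rewrite eqxx.
  + move=> x; case E: (ex0 x) => [M|] // _; have [-> _] := hx _ _ E.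
    exists [:: S]; exact: bc_init.
- by move=> x M /hx [_ ->] C; rewrite /= mem_seq1 => /eqP ->; rewrite /agf take0.
- by move=> x M /hx [_ ->].
- by move=> x M /hx [_ ->] Q _; right; exists [::] => //; rewrite mem_seq1.
- by move=> x; rewrite mem_seq1 => /eqP ->; rewrite hS.
- by move=> x M /hx [-> _]; rewrite mem_seq1 eqxx.
- by [].
- by move=> _; case E: (ex0 G) => [M|] // _; have [-> _] := hx _ _ E; rewrite mem_seq1.
Qed.


Lemma argmin_ex (ex : exT) (D : seq cfg) : D != [::] ->
  exists2 qf, qf \in D & forall x, x \in D -> gof ex qf <= gof ex x.
Proof.
elim: D => [|d D IH] // _; case: (eqVneq D [::]) => [->|hD].
  by exists d; rewrite ?mem_head // => x; rewrite mem_seq1 => /eqP ->.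
have [m hm hmin] := IH hD.
case: (leP (gof ex d) (gof ex m)) => hdm.
  exists d; first exact: mem_head.
  by move=> x; rewrite in_cons => /orP [/eqP ->//|/hmin]; apply: le_trans.
exists m; first by rewrite in_cons hm orbT.
by move=> x; rewrite in_cons => /orP [/eqP ->|/hmin //]; apply: ltW.
Qed.

Lemma progress s : Inv s -> final V n R s \/ exists t, step s t.
Proof.
case: s => ex op goal [|D] [hS [o1 o2 o3 o4]].
- case: op o1 o2 o4 => [|q op] o1 o2 o4; first by left.
  right; have := o1 q (mem_head _ _); case hq: (ex q) => [N|] // _.
  case: (boolP (stop_cond V n R h ex q (newgoal V n G q goal))) => hsc.
    by eexists; apply: (@step_pop V adj n R ce G h gen ex q op goal N hq); left.
  case htr: (ntr N) => [|C tr].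
    by eexists; apply: (@step_pop V adj n R ce G h gen ex q op goal N hq); right.
  set us := (if child_agent V n R N C is Some i then closed_nbhd V adj (q i) else [::]).
  have hok : children_ok V adj n R N q C us.
    by rewrite /children_ok /us; case: (child_agent V n R N C).
  case hg: (gen q C) => [qn|].
    case hu: (updx ex q (set_tree V n R N (tr ++ children V n R N C us)) qn) => [M|].
      by eexists; apply: (@step_old V adj n R ce G h gen ex q op goal N C tr us qn hq hsc htr hok hg); rewrite hu.
    by eexists; apply: (@step_new V adj n R ce G h gen ex q op goal N C tr us qn 1%g hq hsc htr hok hg hu).
  by eexists; apply: (@step_nogen V adj n R ce G h gen ex q op goal N C tr us hq hsc htr hok hg).
- right; case: (eqVneq D [::]) => [->|hD]; first by eexists; apply: step_dijk_end.
  have [qf hqf hmin] := argmin_ex ex hD.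
  by eexists; apply: (@step_dijk V adj n R ce G h gen ex op goal D qf hqf hmin).
Qed.


Lemma bc_sol (ex : exT) x l : GPinv ex -> bchain ex x l -> isSome (ex x) ->
  exists r, [/\ rev l = S :: r, last S r = x, path conn S r & pc S r <= gof ex x].
Proof.
move=> [g0 [NS hS hS0] _ par _] hb; elim: hb => [|q N p l0 hqS hN hp hb IH] _.
  exists [::]; split => //; rewrite (gofE hS) hS0 //.
have [p' [e1 hps hc hle]] := par q N hN hqS.
move: e1 hle hc hps; rewrite hp => -[<-] hle hc hps.
have [r [e2 e3 e4 e5]] := IH hps.
exists (rcons r q); split.
- by rewrite rev_cons e2 rcons_cons.
- by rewrite last_rcons.
- by rewrite rcons_path e4 e3 hc.
- rewrite pc_rcons e3 (gofE hN); apply: le_trans hle; exact: lerD e5 (lexx _).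
Qed.

Lemma final_ok s : Inv s -> final V n R s -> output_correct V adj n R ce S G s.
Proof.
case: s => ex op goal ph [[gp ag nb cp] [o1 o2 o3 o4]] [/= hph hop].
subst ph op; rewrite /output_correct /=.
have hfin x N : ex x = Some N -> ntr N = [::] \/ (goal = Some G /\ fof ex G <= fof ex x).
  by move=> hN; apply: o2 hN _.
have hstep x N y : ex x = Some N -> ntr N = [::] -> conn x y ->
    isSome (ex y) /\ gof ex y <= ngg N + ce x y.
  move=> hN ht hc; case: (cp x N hN y hc) => [hy|[C]]; last by rewrite ht.
  by have [_ a b] := nb x N hN y hy; split => //; apply: b.
have [g0 [NS hS hS0] _ par bc] := gp.
clear o2; case: goal o3 o4 hfin => [qg|] o3 o4 hfin.
- have [-> hG] := o3 qg erefl.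
  have [l hl] := bc G hG; exists l.
  have [r [e1 e2 e3 e4]] := bc_sol gp hl hG.
  rewrite e1; split => //; split; first by split => //; split.
  have opt : forall r' x, isSome (ex x) -> path conn x r' -> last x r' = G ->
      gof ex G <= gof ex x + pc x r'.
    elim=> [|y r' IH] x hx.
      by move=> _ /= ->; rewrite addr0.
    case hN: (ex x) hx => [N|] // _ /= /andP [hc hpath] hlast.
    case: (hfin x N hN) => [ht|[_ hle]].
      have [hy hgy] := hstep x N y hN ht hc.
      apply: le_trans (IH y hy hpath hlast) _.
      by rewrite (gofE hN) addrA lerD2r.
    have hp : path conn x (y :: r') by rewrite /= hc hpath.
    have ha := hadm hp hlast.
    apply: le_trans (_ : fof ex G <= _); first by rewrite /f_of lerDl.
    apply: le_trans hle _; rewrite /f_of (gofE hN) lerD2l; exact: ha.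
  move=> [|q r'] //= [eq [hl' hp']].
  apply: le_trans e4 _; subst q.
  have := opt r' S _ hp' hl'; rewrite (gofE hS) hS0 add0r; apply.
  by rewrite hS.
- move=> [[|q r] //= [eq [hl' hp']]]; subst q.
  have reach : forall r x, isSome (ex x) -> path conn x r -> last x r = G -> isSome (ex G).
    elim=> [|y r0 IH] x hx.
      by move=> _ /= <-.
    case hN: (ex x) hx => [N|] // _ /= /andP [hc hpath] hlast.
    case: (hfin x N hN) => [ht|[]] //.
    have [hy _] := hstep x N y hN ht hc.
    exact: IH hy hpath hlast.
  have hG : isSome (ex G) by apply: (reach r S); rewrite ?hS.
  by have := o4 erefl hG.
Qed.


Lemma main_sec (sig0 : {perm 'I_n}) :
  Acc (fun t s => step s t) (init_state V n R S sig0) /\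
  (forall s, reach V adj n R ce G h gen (init_state V n R S sig0) s ->
     final V n R s \/ exists t, step s t) /\
  (forall s, reach V adj n R ce G h gen (init_state V n R S sig0) s ->
     final V n R s -> output_correct V adj n R ce S G s).
Proof.
have hI : forall s, reach V adj n R ce G h gen (init_state V n R S sig0) s -> Inv s.
  move=> s; elim=> [|t u _ IH hst]; first exact: init_ok.
  by have [] := step_ok IH hst.
split; first exact: acc_ok (init_ok sig0).
split; first by move=> s /hI; apply: progress.
by move=> s /hI; apply: final_ok.
Qed.

End Proof.

Unset Implicit Arguments.
Theorem theorem1 (V : finType) (adj : rel V) (n : nat) (R : realFieldType)
  (S G : config V n) (ce : config V n -> config V n -> R) (h : config V n -> R)
  (gen : config V n -> cnode V n -> option (config V n))
  (sigma0 : {perm 'I_n}) :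
  symmetric adj -> injective S -> injective G ->
  (forall X Y, 0 <= ce X Y) ->
  (forall Q, 0 <= h Q) -> @admissible V adj n R ce G h ->
  @valid_generator V adj n gen ->
  (* termination: no infinite run from the initial state ... *)
  Acc (fun t s => @lstep V adj n R ce G h gen s t) (@init_state V n R S sigma0) /\
  (* ... and no reachable state is stuck before OPEN is empty *)
  (forall s, @reach V adj n R ce G h gen (@init_state V n R S sigma0) s ->
     @final V n R s \/ exists t, @lstep V adj n R ce G h gen s t) /\
  (* completeness and optimality of the returned value *)
  (forall s, @reach V adj n R ce G h gen (@init_state V n R S sigma0) s ->
     @final V n R s -> @output_correct V adj n R ce S G s).
Proof.
move=> _ _ _ hce hh hadm hgen.
exact: (@main_sec V adj n R S G ce h gen hce hh hadm hgen sigma0).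
Qed.
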